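(* Let $p$ be an odd prime, $M$ the sub-add move matrix, and $k$ the $\mathbb Z_p$-order of $M$. Then $\Gamma_{M,\,p}$ contains secondary cycles if and only if $8$ does not divide $k$.
   Context: The sub-add move matrix is $M=\begin{pmatrix}1&-1\\1&1\end{pmatrix}$. $\Gamma_{M,\,p}$ is the directed graph with vertex set $\mathbb Z_p^2$ and arcs $((a,b),(a-b,a+b))$ (mod $p$; loops allowed). The $\mathbb Z_p$-order $k$ of $M$ is the least positive integer with $M^k\equiv I\pmod p$; it equals $4t$ where $t$ is the multiplicative order of $-4$ in $GF(p)$. A directed cycle is a cycle in the underlying undirected graph such that in the induced directed subgraph every vertex has in- and out-degree $1$; a loop is a directed $1$-cycle. A primary cycle is a directed cycle of length $k$; a secondary cycle is a directed cycle that is neither primary nor a $1$-cycle. *)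

(* Defs.v *)
From HB Require Import structures.
From mathcomp Require Import all_boot all_order all_algebra.
Set Implicit Arguments. Unset Strict Implicit. Unset Printing Implicit Defensive.
Import GRing.Theory.
Local Open Scope ring_scope.

Definition subadd (p : nat) : 'M['F_p]_2 :=
  \matrix_(i < 2, j < 2) if (i == 0) && (j == 1) then -1 else 1.

(* Gamma_{M,p}: vertex set Z_p^2 (column vectors), arcs v -> M v,
   i.e. (a,b) -> (a - b, a + b). *)
Definition gamma_step (p : nat) (v : 'cV['F_p]_2) : 'cV['F_p]_2 := subadd p *m v.

Definition directed_cycle (p : nat) (s : seq 'cV['F_p]_2) : bool :=
  [&& (0 < size s)%N, uniq s & fcycle (@gamma_step p) s].

Definition has_secondary_cycle (p k : nat) : Prop :=
  exists s : seq 'cV['F_p]_2,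
    [&& directed_cycle s, size s != k & size s != 1%N].

(* Main.v *)
Require Import Defs.
From HB Require Import structures.
From mathcomp Require Import all_boot all_order all_algebra ring zify.
Import GRing.Theory.
Local Open Scope ring_scope.
Set Implicit Arguments. Unset Strict Implicit.

Section S.
Variable p : nat.
Local Notation M := (subadd p).
Local Notation F := ('F_p).

Lemma ord2P (i : 'I_2) : i = 0 \/ i = 1.
Proof. case: i => [[|[|?]] H] //; [left|right]; exact: val_inj. Qed.
Ltac ordc i := case: (ord2P i) => ->.

Lemma mul2E (A B : 'M[F]_2) : A * B = \matrix_(i, j) (A i 0 * B 0 j + A i 1 * B 1 j).
Proof. by apply/matrixP=> i j; rewrite !mxE !big_ord_recl big_ord0 addr0; congr (_ + A i _ * B _ j); apply: val_inj. Qed.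

Definition mk (a b c d : F) : 'M[F]_2 :=
  \matrix_(i < 2, j < 2) if i == 0 then (if j == 0 then a else b) else (if j == 0 then c else d).

Lemma mkE (A : 'M[F]_2) : A = mk (A 0 0) (A 0 1) (A 1 0) (A 1 1).
Proof. by apply/matrixP=> i j; rewrite !mxE; ordc i; ordc j. Qed.

Lemma mk_mul a b c d a' b' c' d' : mk a b c d * mk a' b' c' d' =
  mk (a*a' + b*c') (a*b'+b*d') (c*a'+d*c') (c*b'+d*d').
Proof. by rewrite mul2E; apply/matrixP=> i j; rewrite !mxE; ordc i; ordc j. Qed.

Lemma ME : M = mk 1 (-1) 1 1.
Proof. by apply/matrixP=> i j; rewrite !mxE; ordc i; ordc j. Qed.

Lemma scalE (a : F) : a%:M = mk a 0 0 a :> 'M[F]_2.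
Proof. by apply/matrixP=> i j; rewrite !mxE; ordc i; ordc j. Qed.

Lemma M2 : M ^+ 2 = mk 0 (-2) 2 0.
Proof. rewrite expr2 ME mk_mul; congr mk; ring. Qed.

Lemma M3 : M ^+ 3 = mk (-2) (-2) 2 (-2).
Proof. rewrite exprS M2 ME mk_mul; congr mk; ring. Qed.

Lemma M4 : M ^+ 4 = (-4)%:M.
Proof. rewrite (exprS _ 3) M3 ME mk_mul scalE; congr mk; ring. Qed.
Local Notation c := (-4 : F).

Lemma Mpow q r : M ^+ (4 * q + r) = c ^+ q *: M ^+ r.
Proof.
rewrite exprD exprM M4 -scalemx1 exprZn expr1n -scalerAl mul1r //.
Qed.

Lemma iterE n v : iter n (@gamma_step p) v = M ^+ n *m v.
Proof.
elim: n => [|n IH] /=; first by rewrite expr0 mul1mx.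
by rewrite IH /gamma_step mulmxA exprS mulmxE.
Qed.

Definition cv (x y : F) : 'cV[F]_2 := \col_(i < 2) (if i == 0 then x else y).

Lemma cvE (v : 'cV[F]_2) : v = cv (v 0 0) (v 1 0).
Proof. by apply/matrixP=> i j; rewrite !mxE (ord1 j); ordc i. Qed.

Lemma mk_mulv a b c' d x y : mk a b c' d *m cv x y = cv (a*x+b*y) (c'*x+d*y).
Proof.
apply/matrixP=> i j; rewrite !mxE !big_ord_recl big_ord0 addr0 !mxE.
rewrite (_ : lift ord0 ord0 = 1 :> 'I_2); last exact: val_inj.
by ordc i.
Qed.

Lemma scale_cv a x y : a *: cv x y = cv (a * x) (a * y).
Proof. by apply/matrixP=> i j; rewrite !mxE; ordc i. Qed.

Lemma cv_eq x y x' y' : cv x y = cv x' y' -> x = x' /\ y = y'.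
Proof. by move/matrixP=> h; have := h 0 0; have := h 1 0; rewrite !mxE /= => -> ->. Qed.

Lemma cv0 : cv 0 0 = 0.
Proof. by apply/matrixP=> i j; rewrite !mxE; ordc i. Qed.

Lemma keyK q (v : 'cV[F]_2) : v != 0 -> M ^+ (4 * q + 2) *m v = v -> c ^+ (2 * q + 1) = 1.
Proof.
rewrite (cvE v); move: (v 0 0) (v 1 0) => x y nz.
rewrite Mpow M2 -scalemxAl mk_mulv scale_cv => /cv_eq [ex ey].
set b := 2 * c ^+ q.
have ex' : x = - (b * y) by rewrite -ex /b; ring.
have ey' : y = b * x by rewrite -{1}ey /b; ring.
have hx : (1 + b ^+ 2) * x = 0.
  have -> : (1 + b ^+ 2) * x = x + b * y by rewrite ey'; ring.
  by rewrite {1}ex'; ring.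
have hy : (1 + b ^+ 2) * y = 0.
  have -> : (1 + b ^+ 2) * y = y - b * x by rewrite ex'; ring.
  by rewrite {1}ey'; ring.
have hb : 1 + b ^+ 2 = 0.
  apply/eqP; apply: contraR nz => nb.
  move/eqP: hx; move/eqP: hy; rewrite !mulf_eq0 (negbTE nb) /= => /eqP -> /eqP ->.
  by rewrite cv0.
have -> : c ^+ (2 * q + 1) = 1 - (1 + b ^+ 2).
  by rewrite /b addn1 exprS mulnC exprM; ring.
by rewrite hb subr0.
Qed.
Lemma notscal r : (0 < r < 4)%N -> (2 : F) != 0 -> (M ^+ r) 0 1 != 0.
Proof.
case: r => [|[|[|[|//]]]] // _ h2.
- by rewrite expr1 ME mxE /= oppr_eq0 oner_eq0.
- by rewrite M2 mxE /= oppr_eq0.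
- by rewrite M3 mxE /= oppr_eq0.
Qed.
End S.

Lemma cyc_traject (T : eqType) (f : T -> T) x s :
  fcycle f (x :: s) -> x :: s = traject f x (size s).+1 /\ iter (size s).+1 f x = x.
Proof.
rewrite /cycle /= => /fpathP [n e].
have hn : n = (size s).+1 by rewrite -(size_traject f (f x) n) -e size_rcons.
move: e; rewrite hn trajectSr => /eqP; rewrite eqseq_rcons => /andP [/eqP e1 /eqP e2].
by rewrite -e1 -iterS iterSr -e2.
Qed.

Unset Implicit Arguments.
Theorem corollary7p3 (p k : nat) :
  prime p -> odd p ->
  (0 < k)%N -> subadd p ^+ k = 1 ->
  (forall j : nat, (0 < j)%N -> subadd p ^+ j = 1 -> (k <= j)%N) ->
  (has_secondary_cycle p k <-> ~~ (8 %| k)%N).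
Proof.
move=> pr op k0 Mk kmin.
have p3 : (2 < p)%N.
  by have := prime_gt1 pr; move: op; case: (p) => [|[|[|n]]].
have two : (2 : 'F_p) != 0.
  apply/eqP => h; move: (val_Fp_nat pr 2); rewrite h modn_small //.
have cnz : (-4 : 'F_p) != 0.
  by rewrite oppr_eq0 (_ : 4 = 2 * 2 :> 'F_p) ?mulf_neq0 //; ring.
have kdvd : forall n, subadd p ^+ n = 1 -> (k %| n)%N.
  move=> n hn.
  have e : subadd p ^+ (n %% k) = 1.
    by move: hn; rewrite {1}(divn_eq n k) exprD mulnC exprM Mk expr1n mul1r.
  rewrite /dvdn; apply/negPn/negP => nz.
  have := kmin _ _ e; rewrite lt0n nz => /(_ isT).
  by rewrite leqNgt ltn_pmod.
split.
- case=> s /and3P [/and3P [sz un cyc] nk n1].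
  case: s sz un cyc nk n1 => [//|v s'] _ un cyc nk n1.
  have [es it] := cyc_traject cyc.
  set d := (size s').+1 in es it nk n1.
  have nI : forall i, (0 < i < d)%N -> iter i (@gamma_step p) v != v.
    move=> i /andP [i0 id]; move: un; rewrite es => un.
    have -> : v = nth v (traject (@gamma_step p) v d) 0 by [].
    rewrite -{1}(nth_traject (@gamma_step p) id v).
    by rewrite nth_uniq ?size_traject // -lt0n.
  have d1 : (1 < d)%N.
    move: n1; rewrite /d /=; lia.
  have vnz : v != 0.
    apply/eqP => v0; have := nI 1%N; rewrite d1 v0 /= /gamma_step mulmx0 eqxx.
    by move=> /(_ isT).
  have Md : subadd p ^+ d *m v = v by rewrite -iterE.
  have Mdn : subadd p ^+ d != 1.
    apply/eqP => h; have kd := kmin d (ltn0Sn _) h.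
    have kd' : (k < d)%N by rewrite ltn_neqAle kd eq_sym nk.
    by have := nI k; rewrite k0 kd' iterE Mk mul1mx eqxx => /(_ isT).
  apply/negP => k8.
  have fin : forall q, subadd p ^+ (4 * q + 2) *m v = v -> False.
    move=> q h; have hc := keyK vnz h.
    have : (k %| 4 * (2 * q + 1))%N.
      by apply: kdvd; rewrite -[(4 * _)%N]addn0 Mpow hc expr0 scale1r.
    move=> /(dvdn_trans k8) /eqP; rewrite /dvdn; lia.
  have dd := divn_eq d 4.
  have r4 : (d %% 4 < 4)%N by rewrite ltn_pmod.
  set q := (d %/ 4)%N in dd; set r := (d %% 4)%N in dd r4.
  have : r = 0%N \/ r = 1%N \/ r = 2%N \/ r = 3%N by lia.
  case=> [r0|[r0|[r0|r0]]].
  + have ed : d = (4 * q + 0)%N by lia.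
    rewrite ed Mpow expr0 in Md Mdn.
    move: Md; rewrite -scalemxAl mul1mx => Md.
    have : (((-4) ^+ q - 1) *: v) == 0 by rewrite scalerBl scale1r Md subrr.
    rewrite scaler_eq0 (negbTE vnz) orbF subr_eq0 => /eqP hc.
    by move: Mdn; rewrite hc scale1r eqxx.
  + apply: (fin (2 * q)%N).
    have e2 : (4 * (2 * q) + 2 = d + d)%N by lia.
    by rewrite e2 exprD -mulmxE -mulmxA !Md.
  + apply: (fin q).
    have e2 : (4 * q + 2 = d)%N by lia.
    by rewrite e2.
  + apply: (fin (2 * q + 1)%N).
    have e2 : (4 * (2 * q + 1) + 2 = d + d)%N by lia.
    by rewrite e2 exprD -mulmxE -mulmxA !Md.
- move=> n8.
  have r0 : (k %% 4 = 0)%N.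
    move: Mk; rewrite {1}(divn_eq k 4) mulnC Mpow.
    case r: (k %% 4)%N => [//|r'] h.
    have hr : (0 < r'.+1 < 4)%N by rewrite -r ltn_pmod // r.
    have := notscal hr two.
    move/matrixP: h => /(_ 0 1); rewrite !mxE /= => /eqP.
    by rewrite mulf_eq0 expf_eq0 (negbTE cnz) andbF /= => /eqP ->; rewrite eqxx.
  set q := (k %/ 4)%N.
  have ek : k = (4 * q + 0)%N by have := divn_eq k 4; rewrite r0 -/q; lia.
  have oq : odd q.
    apply: contraR n8 => eq; rewrite ek addn0.
    have -> : q = (q./2 * 2)%N by rewrite -{1}(odd_double_half q) (negbTE eq) add0n -muln2.
    by rewrite mulnCA; apply: dvdn_mull.
  have cq : (-4 : 'F_p) ^+ q = 1.
    move: Mk; rewrite ek Mpow expr0 => /matrixP /(_ 0 0); rewrite !mxE /=.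
    by rewrite mulr1.
  set h := q./2.
  have eq : q = (2 * h + 1)%N by rewrite /h -{1}(odd_double_half q) oq -muln2; lia.
  set b : 'F_p := 2 * (-4) ^+ h.
  have bnz : b != 0 by rewrite mulf_neq0 // expf_neq0.
  have hb2 : b ^+ 2 = -1.
    have e4 : (-4 : 'F_p) ^+ (2 * h + 1) = -4 * ((-4) ^+ h) ^+ 2 by rewrite addn1 exprS (mulnC 2 h) exprM.
    have : b ^+ 2 = - ((-4 : 'F_p) ^+ (2 * h + 1)) by rewrite e4 /b; ring.
    by rewrite -eq cq.
  set v := cv 1 b.
  set f := @gamma_step p.
  have finj : injective f.
    have Minv : subadd p ^+ k.-1 *m subadd p = 1%:M.
      by rewrite mulmxE -exprSr prednK.
    move=> x y /(congr1 (mulmx (subadd p ^+ k.-1))).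
    by rewrite /f /gamma_step !mulmxA Minv !mul1mx.
  have it : iter (4 * h + 2) f v = v.
    rewrite iterE Mpow M2 -scalemxAl mk_mulv scale_cv /v; congr cv.
      by transitivity (- b ^+ 2); [rewrite /b; ring | rewrite hb2 opprK].
    by rewrite /b; ring.
  have ole : (order f v <= 4 * h + 2)%N.
    rewrite leqNgt; apply/negP => lt.
    have := findex_iter lt; rewrite it /findex /orbit -orderSpred /= eqxx.
    lia.
  have on1 : order f v != 1%N.
    apply/eqP => o1.
    have : f v \in orbit f v by rewrite -fconnect_orbit fconnect1.
    rewrite /orbit o1 /= inE => /eqP.
    rewrite /f /gamma_step /v ME mk_mulv => /cv_eq [e1 _].
    move: bnz; rewrite (_ : b = 0) ?eqxx //.
    transitivity (- ((1 * 1 + -1 * b) - 1)); first ring.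
    by rewrite e1 subrr oppr0.
  exists (orbit f v).
  rewrite /directed_cycle size_orbit order_gt0 orbit_uniq cycle_orbit //=.
  by rewrite on1 andbT; apply/eqP => ok; move: ole; rewrite ok ek eq; lia.
Qed.
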